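(* Let $\Omega$ and $\Omega'$ be two causal orders on the same finite set of events $E$, let $\underline{I}=(I_\omega)_{\omega\in E}$ be a family of non-empty finite sets, and let $\Theta=\mathrm{Hist}(\Omega,\underline{I})$, $\Theta'=\mathrm{Hist}(\Omega',\underline{I})$. Then the meet $\Theta\wedge\Theta'$ is tight if and only if for every $\omega\in E$ we have $\downarrow_\Omega\omega\subseteq\downarrow_{\Omega'}\omega$ or $\downarrow_{\Omega'}\omega\subseteq\downarrow_\Omega\omega$.
   Context: A causal order $\Omega$ on $E$ is a preorder (reflexive transitive relation) $\le_\Omega$ on $E$; $\downarrow_\Omega\omega=\{\xi\in E:\xi\le_\Omega\omega\}$. Partial functions on $\underline{I}$ are functions $f$ with $\mathrm{dom}(f)\subseteq E$ and $f(\omega)\in I_\omega$, ordered by restriction ($f\le g$ iff $\mathrm{dom}(f)\subseteq\mathrm{dom}(g)$ and $g|_{\mathrm{dom}(f)}=f$). $\mathrm{Hist}(\Omega,\underline{I})=\bigcup_{\xi\in E}\prod_{\omega\in\downarrow_\Omega\xi}I_\omega$ (all partial functions whose domain is $\downarrow_\Omega\xi$ for some $\xi$). Partial functions are compatible if they agree on common domain; a compatible set $\mathcal F$ has join $\bigvee\mathcal F$ (union of the functions). For a set $\Theta$ of partial functions, $\mathrm{Ext}(\Theta)=\{\bigvee\mathcal F:\emptyset\ne\mathcal F\subseteq\Theta\text{ compatible}\}$; for a set $W$, $\mathrm{Prime}(W)=\{w\in W:\text{for all compatible }\mathcal F\subseteq W,\ w=\bigvee\mathcal F\Rightarrow w\in\mathcal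 F\}$. The meet is $\Theta\wedge\Theta'=\mathrm{Prime}(\mathrm{Ext}(\Theta)\cup\mathrm{Ext}(\Theta'))$. For a space $\Theta$ and $h\in\mathrm{Ext}(\Theta)$, $\mathrm{tips}_\Theta(h)=\mathrm{dom}(h)\setminus\bigcup\{\mathrm{dom}(k):k\in\mathrm{Ext}(\Theta),k<h\}$. A space $\Theta$ is tight if for every $k\in\mathrm{Ext}(\Theta)$ and every $\omega\in\mathrm{dom}(k)$ there is a unique $h\in\Theta$ with $h\le k$ and $\omega\in\mathrm{tips}_\Theta(h)$. *)

(* Defs.v *)
From mathcomp Require Import all_boot.
Unset Printing Implicit Defensive.

Section PF.
Variables (E : finType) (I : E -> finType).

Definition pfun := forall w : E, option (I w).

Definition dom (f : pfun) (w : E) : Prop := f w <> None.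

(* restriction order: f <= g iff dom f ⊆ dom g and g agrees with f on dom f *)
Definition pf_le (f g : pfun) : Prop := forall w, dom f w -> g w = f w.
Definition pf_lt (f g : pfun) : Prop := pf_le f g /\ f <> g.

Definition pfset := pfun -> Prop.

Definition compatible (F : pfset) : Prop :=
  forall f g, F f -> F g -> forall w, dom f w -> dom g w -> f w = g w.

Definition is_join (F : pfset) (h : pfun) : Prop :=
  forall w, (h w = None <-> (forall f, F f -> f w = None)) /\
            (forall f, F f -> dom f w -> h w = f w).

Definition Ext (Th : pfset) : pfset := fun h =>
  exists F : pfset, (exists f, F f) /\ (forall f, F f -> Th f) /\
                    compatible F /\ is_join F h.

Definition Prime (W : pfset) : pfset := fun w =>
  W w /\ forall F : pfset, (forall f, F f -> W f) -> compatible F ->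
                           is_join F w -> F w.

Definition meet (Th Th' : pfset) : pfset :=
  Prime (fun h => Ext Th h \/ Ext Th' h).

Definition tips (Th : pfset) (h : pfun) (w : E) : Prop :=
  dom h w /\ ~ (exists k, Ext Th k /\ pf_lt k h /\ dom k w).

Definition tight (Th : pfset) : Prop :=
  forall k, Ext Th k -> forall w, dom k w ->
    exists! h, Th h /\ pf_le h k /\ tips Th h w.

Definition causal_order (le : E -> E -> Prop) : Prop :=
  (forall x, le x x) /\ (forall x y z, le x y -> le y z -> le x z).

Definition down (le : E -> E -> Prop) (w : E) : E -> Prop := fun x => le x w.

Definition Hist (le : E -> E -> Prop) : pfset := fun f =>
  exists xi : E, forall w, dom f w <-> down le xi w.

End PF.
Arguments Hist {E} I le _.
Arguments meet {E I} Th Th' _.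
Arguments tight {E I} Th.
Arguments down {E} le w _.
Arguments causal_order {E} le.

(* Main.v *)
Require Import Defs.
From mathcomp Require Import all_boot.
From Stdlib Require Import Classical ClassicalEpsilon FunctionalExtensionality.

Section Aux.
Variables (E : finType) (I : E -> finType).

Lemma eq_of_dom (f h : pfun E I) : pf_le E I f h ->
  (forall x, dom E I h x -> dom E I f x) -> f = h.
Proof.
intros Hle Hd. apply functional_extensionality_dep; intro x.
unfold pf_le, dom in *.
destruct (f x) eqn:Ef.
- rewrite <- Ef. symmetry. apply Hle. rewrite Ef; discriminate.
- destruct (h x) eqn:Eh; auto. exfalso. apply (Hd x); [rewrite Eh; discriminate | exact Ef].
Qed.

Lemma ext_single (Th : pfset E I) h : Th h -> Ext E I Th h.
Proof.
intro Hh. exists (fun f => f = h). split; [exists h; reflexivity|].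
split; [intros f ->; assumption|]. split.
- intros f g -> -> w _ _; reflexivity.
- intro w; split; [split; [intros H f ->; exact H | intros H; apply H; reflexivity]
                   | intros f -> _; reflexivity].
Qed.

Lemma join_witness (F : pfset E I) k w : is_join E I F k -> dom E I k w ->
  exists g, F g /\ pf_le E I g k /\ dom E I g w.
Proof.
intros HJ Hk.
destruct (classic (exists g, F g /\ dom E I g w)) as [[g [Fg Dg]]|Hn].
- exists g; split; [auto|split; [|auto]]. intros x Dx. apply (proj2 (HJ x)); auto.
- exfalso. apply Hk. apply (proj1 (HJ w)). intros f Ff. destruct (f w) eqn:Ef; auto.
  exfalso; apply Hn; exists f; split; auto; unfold dom; rewrite Ef; discriminate.
Qed.

Lemma ext_witness (Th : pfset E I) k w : Ext E I Th k -> dom E I k w ->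
  exists g, Th g /\ pf_le E I g k /\ dom E I g w.
Proof.
intros [F [_ [HT [_ HJ]]]] Hk.
destruct (join_witness F k w HJ Hk) as [g [Fg Hg]]. exists g; auto.
Qed.

Lemma ext_down le : causal_order le -> forall g w x,
  Ext E I (Hist I le) g -> dom E I g w -> le x w -> dom E I g x.
Proof.
intros [_ Htr] g w x Hg Dw Hxw.
destruct (ext_witness _ _ _ Hg Dw) as [f [[xi Hxi] [Hle Df]]].
assert (Dfx : dom E I f x).
{ apply (proj2 (Hxi x)). unfold down. eapply Htr; [exact Hxw| apply (proj1 (Hxi w)); exact Df]. }
unfold dom. rewrite (Hle x Dfx). exact Dfx.
Qed.

Lemma pfle_dom f k x : pf_le E I f k -> dom E I f x -> dom E I k x.
Proof. intros Hle D. unfold dom. rewrite (Hle x D). exact D. Qed.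

Lemma W_down (W : pfset E I) le le' : causal_order le -> causal_order le' ->
  (forall f, W f -> Ext E I (Hist I le) f \/ Ext E I (Hist I le') f) ->
  forall k w, Ext E I (Prime E I W) k -> dom E I k w ->
  (forall x, le x w -> dom E I k x) \/ (forall x, le' x w -> dom E I k x).
Proof.
intros Hc Hc' HW k w Hk Dk.
destruct (ext_witness _ _ _ Hk Dk) as [g [[Wg _] [Hle Dg]]].
destruct (HW g Wg) as [Hg|Hg]; [left|right]; intros x Hx; apply (pfle_dom g); auto.
- exact (ext_down le Hc g w x Hg Dg Hx).
- exact (ext_down le' Hc' g w x Hg Dg Hx).
Qed.

Lemma prime_of (W : pfset E I) (A : E -> Prop) h w :
  (forall x, dom E I h x <-> A x) -> A w -> W h ->
  (forall f, W f -> pf_le E I f h -> dom E I f w -> forall x, A x -> dom E I f x) ->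
  Prime E I W h.
Proof.
intros HA Aw Wh Hf. split; auto. intros F HFW Hc HJ.
destruct (join_witness F h w HJ (proj2 (HA w) Aw)) as [f [Ff [Hle Df]]].
assert (f = h) as <-; auto.
apply eq_of_dom; auto. intros x Dx. apply (Hf f (HFW f Ff) Hle Df x). apply HA; auto.
Qed.

Lemma tips_of (Th : pfset E I) h w (A : E -> Prop) :
  (forall x, dom E I h x <-> A x) ->
  (forall f, Ext E I Th f -> pf_le E I f h -> dom E I f w -> forall x, A x -> dom E I f x) ->
  A w -> tips E I Th h w.
Proof.
intros HA Hf Aw. split; [apply HA; auto|].
intros [k [Hk [[Hle Hne] Dk]]]. apply Hne. apply eq_of_dom; auto.
intros x Dx. apply (Hf k Hk Hle Dk x). apply HA; auto.
Qed.

Variable d : forall w, I w.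

Definition mk (P : E -> Prop) : pfun E I := fun w =>
  if excluded_middle_informative (P w) then Some (d w) else None.

Lemma dom_mk P x : dom E I (mk P) x <-> P x.
Proof.
unfold dom, mk. destruct (excluded_middle_informative (P x)); split; auto; try discriminate.
intro H; exfalso; auto.
Qed.

Lemma mk_val P x : dom E I (mk P) x -> mk P x = Some (d x).
Proof.
unfold dom, mk. destruct (excluded_middle_informative (P x)); auto. intro H; exfalso; auto.
Qed.

Lemma side (W : pfset E I) lo lt : causal_order lo -> causal_order lt ->
  (forall f, W f -> Ext E I (Hist I lo) f \/ Ext E I (Hist I lt) f) ->
  (forall f, Ext E I (Hist I lo) f -> W f) ->
  forall w x2, lt x2 w -> ~ lo x2 w ->
  Prime E I W (mk (fun x => lo x w)) /\ tips E I (Prime E I W) (mk (fun x => lo x w)) w.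
Proof.
intros Hc Hc' HW HW' w x2 H2 N2. destruct Hc as [Hrefl Htr].
split.
- apply (prime_of W (fun x => lo x w) _ w); auto.
  + intro x; exact (dom_mk (fun y => lo y w) x).
  + apply HW', ext_single. exists w; intro x; apply dom_mk.
  + intros f Wf Hle Df x Ax. destruct (HW f Wf) as [Hf|Hf].
    * exact (ext_down lo (conj Hrefl Htr) f w x Hf Df Ax).
    * exfalso. apply N2. apply (proj1 (dom_mk (fun x => lo x w) x2)).
      apply (pfle_dom f); auto. exact (ext_down lt Hc' f w x2 Hf Df H2).
- apply (tips_of _ _ w (fun x => lo x w)); auto.
  + intro x; exact (dom_mk (fun y => lo y w) x).
  + intros f Hf Hle Df x Ax.
    destruct (W_down W lo lt (conj Hrefl Htr) Hc' HW f w Hf Df) as [Hd|Hd]; auto.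
    exfalso. apply N2. apply (proj1 (dom_mk (fun x => lo x w) x2)).
    apply (pfle_dom f); auto.
Qed.

End Aux.

Theorem theorem3 (E : finType) (I : E -> finType)
    (le le' : E -> E -> Prop) :
  causal_order le -> causal_order le' ->
  (forall w : E, inhabited (I w)) ->
  tight (meet (Hist I le) (Hist I le')) <->
  (forall w : E, (forall x, down le w x -> down le' w x) \/
                 (forall x, down le' w x -> down le w x)).
Proof.
intros Hc Hc' Hinh.
set (W := fun h => Ext E I (Hist I le) h \/ Ext E I (Hist I le') h).
assert (HW : forall f, W f -> Ext E I (Hist I le) f \/ Ext E I (Hist I le') f) by auto.
assert (HWs : forall f, W f -> Ext E I (Hist I le') f \/ Ext E I (Hist I le) f)
  by (intros f [H|H]; auto).
change (meet (Hist I le) (Hist I le')) with (Prime E I W).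
split.
- intros T w.
  destruct (classic (forall x, down le w x -> down le' w x)) as [H1|H1]; [left; auto|].
  destruct (classic (forall x, down le' w x -> down le w x)) as [H2|H2]; [right; auto|].
  exfalso.
  apply not_all_ex_not in H1. destruct H1 as [x1 H1].
  apply not_all_ex_not in H2. destruct H2 as [x2 H2].
  apply imply_to_and in H1. apply imply_to_and in H2.
  destruct H1 as [A1 B1]. destruct H2 as [A2 B2]. unfold down in *.
  pose (d := fun w => epsilon (Hinh w) (fun _ => True)).
  pose (h1 := mk E I d (fun x => le x w)).
  pose (h2 := mk E I d (fun x => le' x w)).
  pose (k := mk E I d (fun x => le x w \/ le' x w)).
  destruct (side E I d W le le' Hc Hc' HW (fun f H => or_introl H) w x2 A2 B2) as [P1 T1].
  destruct (side E I d W le' le Hc' Hc HWs (fun f H => or_intror H) w x1 A1 B1) as [P2 T2].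
  fold h1 in P1, T1. fold h2 in P2, T2.
  assert (Hle1 : pf_le E I h1 k).
  { intros x Dx. unfold h1, k in *. rewrite (mk_val E I d _ x Dx). apply mk_val.
    apply dom_mk. left. exact (proj1 (dom_mk E I d _ x) Dx). }
  assert (Hle2 : pf_le E I h2 k).
  { intros x Dx. unfold h2, k in *. rewrite (mk_val E I d _ x Dx). apply mk_val.
    apply dom_mk. right. exact (proj1 (dom_mk E I d _ x) Dx). }
  assert (Hk : Ext E I (Prime E I W) k).
  { exists (fun f => f = h1 \/ f = h2). split; [exists h1; auto|]. split.
    { intros f [->| ->]; auto. } split.
    { intros f g Hf Hg x Df Dg.
      assert (Hv : forall f, f = h1 \/ f = h2 -> dom E I f x -> f x = Some (d x)).
      { intros f' [->| ->]; apply mk_val. }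
      rewrite (Hv f Hf Df) (Hv g Hg Dg); reflexivity. }
    intro x. split.
    - split.
      + intros Hn f [->| ->].
        * destruct (classic (dom E I h1 x)) as [D|D].
          -- rewrite (Hle1 x D) in Hn; contradiction.
          -- unfold dom in D; apply NNPP; exact D.
        * destruct (classic (dom E I h2 x)) as [D|D].
          -- rewrite (Hle2 x D) in Hn; contradiction.
          -- unfold dom in D; apply NNPP; exact D.
      + intros H. destruct (classic (dom E I k x)) as [D|D].
        * apply (proj1 (dom_mk E I d (fun y => le y w \/ le' y w) x)) in D.
          destruct D as [D|D].
          -- exfalso. apply (proj2 (dom_mk E I d (fun y => le y w) x) D). apply H; auto.
          -- exfalso. apply (proj2 (dom_mk E I d (fun y => le' y w) x) D). apply H; auto.
        * unfold dom in D; apply NNPP; exact D.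
    - intros f [->| ->] Df; [apply Hle1 | apply Hle2]; auto. }
  assert (Dk : dom E I k w).
  { apply (proj2 (dom_mk E I d (fun y => le y w \/ le' y w) w)). left. apply (proj1 Hc). }
  destruct (T k Hk w Dk) as [h [_ Hu]].
  assert (E1 : h = h1) by (apply Hu; auto).
  assert (E2 : h = h2) by (apply Hu; auto).
  apply B1. apply (proj1 (dom_mk E I d (fun y => le' y w) x1)). fold h2. rewrite -E2 E1.
  apply (proj2 (dom_mk E I d (fun y => le y w) x1)). exact A1.
- intros C k Hk w Dk.
  destruct Hc as [Hr Ht]. destruct Hc' as [Hr' Ht'].
  pose (h := fun x => if excluded_middle_informative (le x w /\ le' x w) then k x else None).
  assert (cA : forall x, le x w /\ le' x w -> dom E I k x).
  { intros x [a b].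
    destruct (W_down E I W le le' (conj Hr Ht) (conj Hr' Ht') HW k w Hk Dk) as [Hd|Hd]; auto. }
  assert (Hdh : forall x, dom E I h x <-> le x w /\ le' x w).
  { intro x. unfold h, dom. destruct (excluded_middle_informative (le x w /\ le' x w)) as [c|c].
    - split; auto. intros _. apply cA; auto.
    - split; [intro H; exfalso; auto | intro H; exfalso; auto]. }
  assert (Hhk : pf_le E I h k).
  { intros x Dx. pose proof (proj1 (Hdh x) Dx) as c. unfold h.
    destruct (excluded_middle_informative (le x w /\ le' x w)); [reflexivity | contradiction]. }
  assert (Wc : forall f, W f -> dom E I f w -> forall x, le x w /\ le' x w -> dom E I f x).
  { intros f [Hf|Hf] Df x [a b].
    - exact (ext_down E I le (conj Hr Ht) f w x Hf Df a).
    - exact (ext_down E I le' (conj Hr' Ht') f w x Hf Df b). }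
  assert (Ph : Prime E I W h).
  { apply (prime_of E I W (fun x => le x w /\ le' x w) h w).
    - exact Hdh.
    - split; auto.
    - destruct (C w) as [Hab|Hba].
      + left. apply ext_single. exists w. intro x. unfold down.
        split; [intro H; apply (proj1 (Hdh x)) in H; destruct H as [a b]; exact a
               | intro a; apply (proj2 (Hdh x)); split; [exact a | exact (Hab x a)]].
      + right. apply ext_single. exists w. intro x. unfold down.
        split; [intro H; apply (proj1 (Hdh x)) in H; destruct H as [a b]; exact b
               | intro b; apply (proj2 (Hdh x)); split; [exact (Hba x b) | exact b]].
    - intros f Wf _ Df. apply Wc; auto. }
  exists h. split.
  + split; [exact Ph|]. split; [exact Hhk|].
    apply (tips_of E I _ h w (fun x => le x w /\ le' x w)); auto.
    intros f Hf _ Df x [a b].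
    destruct (W_down E I W le le' (conj Hr Ht) (conj Hr' Ht') HW f w Hf Df) as [Hd|Hd]; auto.
  + intros h' [Ph' [Hle' [Dh' Tip']]].
    destruct (classic (h = h')) as [e|ne]; auto. exfalso. apply Tip'.
    exists h. split; [apply ext_single; exact Ph|]. split; [|apply Hdh; auto].
    split; auto.
    intros x Dx.
    assert (D' : dom E I h' x) by (apply (Wc h' (proj1 Ph') Dh'); apply Hdh; exact Dx).
    rewrite -(Hle' x D'). apply Hhk; exact Dx.
Qed.
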